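(* Let $\mathcal{H},\mathcal{G}$ be Sperner hypergraphs on a vertex set $V$ with $n=|V|$, $\mathcal{G}\subseteq Tr(\mathcal{H})$ and $\mathcal{H}\subseteq Tr(\mathcal{G})$. The procedure Dualize described below, run with $k=\textsc{VC-dim}(\mathcal{H})+1$, runs in time $(n|\mathcal{G}|)^{O(\log|\mathcal{H}|)}$.
   Context: A transversal meets every hyperedge; $Tr(\cdot)$ denotes the hypergraph of inclusion-minimal transversals. $\textsc{VC-dim}(\mathcal{H})$ is the largest size of a set $U$ such that every $U'\subseteq U$ equals $F\cap U$ for some $F\in\mathcal{H}$. A $k$-trace on $V$ is a pair $(T,S)$ with $S\subseteq V$, $|S|=k$, $T\subseteq S$, realized by $F$ if $F\cap S=T$; $\mathrm{traces}_k(\mathcal{H})$ is the set of $k$-traces realized by hyperedges of $\mathcal{H}$; $\mathrm{ext}_k(\mathcal{H})$ is the set of all $E\subseteq V$ all of whose realized $k$-traces lie in $\mathrm{traces}_k(\mathcal{H})$. Procedure Dualize$(\mathcal{H},\mathcal{G},k)$: (1) for each $k$-trace $(T,S)\notin\mathrm{traces}_k(\mathcal{H})$, test (via the sub-transversal test in time $O(n|\mathcal{G}|^{|T|+1})$) whether some $E\in Tr(\mathcal{G})$ realizes $(T,S)$, and if so return such $E$; (2) compute $\mathrm{ext}_k(\mathcal{H})$ (by adding vertices one at a time and keeping, for each retained set $E$, those of $E$ and $E\cup\{v_i\}$ whose $k$-traces containing $v_i$ are realized by $\{F\cap\{v_1,\dots,v_i\}:F\in\mathcal{H}\}$), and for each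 $E\in\mathrm{ext}_k(\mathcal{H})$ contained in no hyperedge of $\mathcal{H}$, if $E\in Tr(\mathcal{G})$ return $E$; (3) return ''Yes''. *)

(* Defs.v *)
(* Hypergraphs on the vertex set V = 'I_n, vertices ordered
   v_1 < ... < v_n as the ordinals 0 < ... < n-1. *)
From mathcomp Require Import all_boot.
Set Implicit Arguments. Unset Strict Implicit. Unset Printing Implicit Defensive.

Section Hyp.
Variable n : nat.
Notation V := 'I_n.
Notation hyp := {set {set V}}.

Definition sperner (H : hyp) : Prop :=
  forall E F, E \in H -> F \in H -> E \subset F -> E = F.

Definition transversal (G : hyp) (E : {set V}) : bool :=
  [forall F in G, ~~ [disjoint E & F]].

Definition Tr (G : hyp) : hyp :=
  [set E | transversal G E && [forall E' : {set V}, (E' \proper E) ==> ~~ transversal G E']].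

Definition shattered (H : hyp) (U : {set V}) : bool :=
  [forall U' in powerset U, [exists F in H, F :&: U == U']].

Definition vc_dim (H : hyp) : nat := \max_(U : {set V} | shattered H U) #|U|.

Definition is_ktrace (k : nat) (TS : {set V} * {set V}) : bool :=
  (#|TS.2| == k) && (TS.1 \subset TS.2).

Definition traces (k : nat) (H : hyp) : {set {set V} * {set V}} :=
  [set TS | is_ktrace k TS && [exists F in H, F :&: TS.2 == TS.1]].

Definition ext (k : nat) (H : hyp) : hyp :=
  [set E | [forall S : {set V}, (#|S| == k) ==> ((E :&: S, S) \in traces k H)]].

(* prefix {v_1,...,v_i} and the vertex v_i (ordinal of value i-1) *)
Definition prefix (i : nat) : {set V} := [set v : V | val v < i].
Definition vtx (i : nat) : {set V} := [set v : V | val v == i.-1].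

Definition new_ksets (k i : nat) : {set {set V}} :=
  [set S : {set V} | (S \subset prefix i) && (#|S| == k) && (vtx i \subset S)].

Definition stage_ok (k : nat) (H : hyp) (i : nat) (E : {set V}) : bool :=
  [forall S in new_ksets k i,
     [exists F in H, (F :&: prefix i) :&: S == E :&: S]].

(* the family retained after processing v_1..v_i in step (2) *)
Fixpoint retained (k : nat) (H : hyp) (i : nat) : hyp :=
  match i with
  | 0 => [set set0]
  | i'.+1 =>
      [set E' | [exists E in retained k H i',
                  (E' == E) || (E' == E :|: vtx i'.+1)]
                && stage_ok k H i'.+1 E']
  end.

(* ---- cost model (unit-cost operations) ----
   checking whether a set is realized as a trace by H : n|H|+1
   sub-transversal test for (T,S) : n |G|^(|T|+1)  (as given in the paper)
   test E \in Tr(G)                : n^2 |G| + 1                           *)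
Definition cost_trace_check (H : hyp) : nat := (n * #|H|).+1.

Definition cost_step1 (H G : hyp) (k : nat) : nat :=
  \sum_(TS : {set V} * {set V} | is_ktrace k TS)
     (cost_trace_check H +
      (if TS \notin traces k H then n * #|G| ^ (#|TS.1|.+1) else 0)).

Definition cost_stage (H : hyp) (k i : nat) : nat :=
  (2 * #|retained k H i.-1| * (#|new_ksets k i| * cost_trace_check H).+1).+1.

Definition cost_step2 (H G : hyp) (k : nat) : nat :=
  \sum_(1 <= i < n.+1) cost_stage H k i
  + \sum_(E in retained k H n)
      (#|H| * cost_trace_check H + (n * n * #|G|).+1).

Definition dualize_cost (H G : hyp) (k : nat) : nat :=
  (cost_step1 H G k + cost_step2 H G k).+1.

End Hyp.

(* Main.v *)
Require Import Defs.
From mathcomp Require Import all_boot zify.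
Set Implicit Arguments. Unset Strict Implicit. Unset Printing Implicit Defensive.

Section Aux.
Variable n : nat.
Notation V := 'I_n.
Notation hyp := {set {set V}}.

Lemma shatteredP (F : hyp) (U : {set V}) :
  reflect (forall T : {set V}, T \subset U -> exists2 E, E \in F & E :&: U = T) (shattered F U).
Proof.
apply: (iffP forall_inP) => h T; rewrite ?inE => hT.
  have /existsP[E /andP[EF /eqP e]] := h T (ltac:(by rewrite inE)); by exists E.
by have [E EF e] := h T hT; apply/existsP; exists E; rewrite EF e eqxx.
Qed.

Lemma shattered_sub (F : hyp) (U U' : {set V}) : shattered F U -> U' \subset U -> shattered F U'.
Proof.
move=> /shatteredP h sU; apply/shatteredP => T sT.
have [E EF e] := h T (subset_trans sT sU).
exists E => //; apply/setP => y; move/setP: e => /(_ y); rewrite !inE.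
case yU': (y \in U') => /=; last by rewrite andbF; move=> _; apply/esym/negbTE; apply: contraFN yU'; apply: (subsetP sT).
by rewrite (subsetP sU _ yU') andbT.
Qed.

Lemma shattered_mono (F F' : hyp) (U : {set V}) : F \subset F' -> shattered F U -> shattered F' U.
Proof.
move=> sF /shatteredP h; apply/shatteredP => T sT.
by have [E EF e] := h T sT; exists E => //; apply: (subsetP sF).
Qed.

Lemma shattered_card (F : hyp) (U : {set V}) : shattered F U -> 2 ^ #|U| <= #|F|.
Proof.
move=> /shatteredP h; rewrite -card_powerset.
apply: leq_trans (leq_imset_card (fun E => E :&: U) F).
apply: subset_leq_card; apply/subsetP => T; rewrite inE => sT.
by have [E EF e] := h T sT; apply/imsetP; exists E.
Qed.

Lemma vc_dim_shattered (H : hyp) (U : {set V}) : shattered H U -> #|U| <= vc_dim H.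
Proof. by move=> sh; rewrite /vc_dim; apply: (@leq_bigmax_cond _ (shattered H) (fun U : {set V} => #|U|) U sh). Qed.

Lemma vc_dim_log (H : hyp) : vc_dim H <= trunc_log 2 #|H|.
Proof.
rewrite /vc_dim; apply/bigmax_leqP => U sh.
by apply: trunc_log_max => //; apply: shattered_card.
Qed.

Lemma subset_of_card (S : {set V}) k : k <= #|S| -> exists2 S' : {set V}, S' \subset S & #|S'| = k.
Proof.
move eqm: #|S| => m; elim: m S eqm => [|m IH] S eqm.
  by rewrite leqn0 => /eqP ->; exists S.
rewrite leq_eqVlt => /orP[/eqP ->|]; first by exists S.
rewrite ltnS => km.
have : 0 < #|S| by rewrite eqm.
case/card_gt0P => x xS.
have cS : #|S :\ x| = m by rewrite (cardsD1 x S) xS add1n in eqm; case: eqm.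
have [S' s1 s2] := IH _ cS km.
by exists S' => //; apply: subset_trans s1 (subsetDl _ _).
Qed.

Definition fsmall m (f : {ffun 'I_m -> option V}) : {set V} := [set v | Some v \in codom f].
Definition gsmall m (S : {set V}) : {ffun 'I_m -> option V} :=
  [ffun i : 'I_m => nth None [seq Some x | x <- enum S] i].

Lemma fgsmall m (S : {set V}) : #|S| <= m -> fsmall (gsmall m S) = S.
Proof.
move=> hS; apply/setP => v; rewrite inE; apply/codomP/idP.
  case=> i; rewrite ffunE.
  case: (ltnP i (size (enum S))) => hi.
    by rewrite (nth_map v) // => -[->]; rewrite -mem_enum mem_nth.
  by rewrite nth_default // size_map.
move=> vS.
have hi : index v (enum S) < m.
  by apply: leq_trans hS; rewrite cardE index_mem mem_enum.
exists (Ordinal hi); rewrite ffunE /= (nth_map v); last by rewrite index_mem mem_enum.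
by rewrite nth_index // mem_enum.
Qed.

Lemma card_small m : #|[set S : {set V} | #|S| <= m]| <= n.+1 ^ m.
Proof.
have -> : n.+1 ^ m = #|{ffun 'I_m -> option V}| by rewrite card_ffun card_option !card_ord.
apply: leq_trans (max_card (fsmall (m:=m) @^-1: [set S : {set V} | #|S| <= m])) .
rewrite -(card_in_imset (f := @gsmall m)).
  apply: subset_leq_card; apply/subsetP => f /imsetP[S]; rewrite inE => hS ->.
  by rewrite !inE fgsmall.
by move=> S1 S2; rewrite !inE => h1 h2 e; rewrite -(fgsmall h1) -(fgsmall h2) e.
Qed.
End Aux.

Section Pajor.
Variable n : nat.
Notation V := 'I_n.
Notation hyp := {set {set V}}.

Definition shs (F : hyp) : {set {set V}} := [set S | shattered F S].

Lemma sh_set0 (F : hyp) : F != set0 -> set0 \in shs F.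
Proof.
case/set0Pn => E EF; rewrite inE; apply/shatteredP => T.
rewrite subset0 => /eqP ->; exists E => //; exact: setI0.
Qed.

Section Split.
Variables (F : hyp) (x : V).
Let P : {set {set V}} := [set E : {set V} | x \in E].
Let F1 := F :&: P.
Let F0 := F :\: P.

Lemma notin_sh0 S : shattered F0 S -> x \notin S.
Proof.
move/shatteredP => /(_ S (subxx S)) [E]; rewrite !inE => /andP[xE _] e.
by apply: contra xE => xS; rewrite -e in xS; rewrite inE in xS; case/andP: xS.
Qed.

Lemma notin_sh1 S : shattered F1 S -> x \notin S.
Proof.
move/shatteredP => /(_ set0 (sub0set S)) [E]; rewrite !inE => /andP[_ xE] e.
apply/negP => xS; move/setP: e => /(_ x); by rewrite !inE xE xS.
Qed.

Lemma sh_add S : shattered F0 S -> shattered F1 S -> shattered F (x |: S).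
Proof.
move=> h0 h1; have xS := notin_sh0 h0.
move/shatteredP: h0 => h0; move/shatteredP: h1 => h1.
apply/shatteredP => T sT.
case xT: (x \in T).
  have sT' : T :\ x \subset S.
    apply/subsetP => y; rewrite !inE => /andP[yx yT].
    by move/subsetP: sT => /(_ y yT); rewrite !inE (negbTE yx).
  have [E] := h1 _ sT'; rewrite !inE => /andP[EF xE] e.
  exists E => //; apply/setP => y; move/setP: e => /(_ y); rewrite !inE.
  case: (eqVneq y x) => [->|yx] /=; first by rewrite xE xT.
  by move=> ->.
have sT' : T \subset S.
  apply/subsetP => y yT; move/subsetP: sT => /(_ y yT); rewrite !inE.
  by case: (eqVneq y x) => [eyx|] //=; rewrite eyx xT in yT.
have [E] := h0 _ sT'; rewrite !inE => /andP[xE EF] e.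
exists E => //; apply/setP => y; move/setP: e => /(_ y); rewrite !inE.
case: (eqVneq y x) => [->|yx] /=; last by move=> ->.
by rewrite (negbTE xE) xT.
Qed.

Lemma pajor_step : #|F0| <= #|shs F0| -> #|F1| <= #|shs F1| -> #|F| <= #|shs F|.
Proof.
move=> i0 i1.
have <- : #|F1| + #|F0| = #|F| by rewrite cardsID.
set s0 := shs F0; set s1 := shs F1.
set img := (fun S => x |: S) @: (s0 :&: s1).
have cimg : #|img| = #|s0 :&: s1|.
  apply: card_in_imset => S1 S2; rewrite !inE => /andP[a1 _] /andP[a2 _] e.
  by rewrite -(setU1K (notin_sh0 a1)) -(setU1K (notin_sh0 a2)) e.
have disj : (s0 :|: s1) :&: img = set0.
  apply/setP => S; rewrite !inE; apply/negbTE.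
  apply/negP => /andP[/orP[a|a] /imsetP[S' _ eS]]; subst S.
    by move: (notin_sh0 a); rewrite setU11.
  by move: (notin_sh1 a); rewrite setU11.
have sub : (s0 :|: s1) :|: img \subset shs F.
  apply/subsetP => S; rewrite !inE => /orP[/orP[a|a]|/imsetP[S' ]].
  - by apply: shattered_mono a; apply: subsetDl.
  - by apply: shattered_mono a; apply: subsetIl.
  by rewrite !inE => /andP[a b] ->; apply: sh_add.
apply: leq_trans (subset_leq_card sub).
have := cardsUI (s0 :|: s1) img; rewrite disj cards0 addn0 => ->.
have := cardsUI s0 s1; rewrite cimg.
move=> e; rewrite e; rewrite addnC; exact: leq_add.
Qed.

Lemma split_nonempty E1 E2 : E1 \in F -> E2 \in F -> (x \in E1) != (x \in E2) ->
  (0 < #|F1|) && (0 < #|F0|).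
Proof.
move=> e1 e2 ne.
wlog xE1 : E1 E2 e1 e2 ne / x \in E1.
  move=> W; case xE: (x \in E1); first exact: (W E1 E2).
  apply: (W E2 E1) => //; first by rewrite eq_sym.
  by move: ne; rewrite xE; case: (x \in E2).
rewrite xE1 in ne.
apply/andP; split; apply/card_gt0P.
  by exists E1; rewrite !inE e1 xE1.
by exists E2; rewrite !inE e2 andbT; case: (x \in E2) ne.
Qed.

End Split.

Lemma pajor (F : hyp) : #|F| <= #|shs F|.
Proof.
move: {2}#|F|.+1 (ltnSn #|F|) => m; elim: m F => // m IH F hF.
case: (leqP #|F| 1) => h1.
  case: (posnP #|F|) => [-> //|h0].
  apply: leq_trans h1 _; apply/card_gt0P; exists set0; apply: sh_set0.
  by rewrite -card_gt0.
case/card_gt1P: h1 => E1 [E2 [e1 e2 ne]].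
have [x hx] : exists x, (x \in E1) != (x \in E2).
  apply/existsP; apply: contraR ne; rewrite negb_exists => /forallP h.
  by apply/eqP/setP => y; move: (h y); rewrite negbK => /eqP.
have /andP[p1 p0] := split_nonempty e1 e2 hx.
set P : {set {set V}} := [set E : {set V} | x \in E].
have cF : #|F :&: P| + #|F :\: P| = #|F| by rewrite cardsID.
apply: (pajor_step (x:=x)); apply: IH; move: p1 p0 hF; rewrite -cF -/P; lia.
Qed.

End Pajor.

Section Ret.
Variable n : nat.
Notation V := 'I_n.
Notation hyp := {set {set V}}.

Lemma retained_prop k (H : hyp) i E : 0 < k -> E \in retained k H i ->
  E \subset Defs.prefix n i /\
  forall S : {set V}, S \subset Defs.prefix n i -> #|S| = k -> exists2 F, F \in H & F :&: S = E :&: S.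
Proof.
move=> k0; elim: i E => [|i IH] E /=.
  rewrite inE => /eqP ->; split; first exact: sub0set.
  move=> S sS cS; have : S = set0.
    by apply/setP => y; rewrite inE; apply/negbTE; apply/negP => /(subsetP sS); rewrite inE.
  by move=> e; move: cS k0; rewrite e cards0 => <-.
rewrite inE => /andP[/existsP[E0 /andP[E0r eE]] ok].
have [sE0 tE0] := IH E0 E0r.
have sv : vtx n i.+1 \subset Defs.prefix n i.+1.
  by apply/subsetP => y; rewrite !inE /= => /eqP ->.
have sp : Defs.prefix n i \subset Defs.prefix n i.+1.
  by apply/subsetP => y; rewrite !inE; apply: ltnW.
split.
  case/orP: eE => /eqP ->; first exact: subset_trans sE0 sp.
  by rewrite subUset sv (subset_trans sE0 sp).
move=> S sS cS.
case vS: (vtx n i.+1 \subset S).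
  have : S \in new_ksets n k i.+1 by rewrite inE sS cS eqxx vS.
  move/forall_inP: ok => h /h /existsP[F /andP[FH /eqP e]].
  exists F => //; rewrite -e; apply/setP => y; rewrite !inE.
  case yS: (y \in S); rewrite ?andbF // ?andbT.
  by move/subsetP: sS => /(_ y yS); rewrite inE => ->; rewrite andbT.
case/subsetPn: vS => y; rewrite inE /= => /eqP ey yS.
have sS' : S \subset Defs.prefix n i.
  apply/subsetP => z zS; move/subsetP: sS => /(_ z zS); rewrite !inE ltnS leq_eqVlt.
  case/orP => // /eqP ez; have : z = y by apply: val_inj; rewrite /= ez ey.
  by move=> e; rewrite -e zS in yS.
have [F FH e] := tE0 S sS' cS.
exists F => //; rewrite e.
case/orP: eE => /eqP -> //.
apply/setP => z; rewrite !inE.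
case zS: (z \in S); rewrite ?andbF ?andbT //.
case: (z \in E0) => //=; apply/esym/negbTE/eqP => ez.
have : z = y by apply: val_inj; rewrite /= ez ey.
by move=> e'; rewrite -e' zS in yS.
Qed.

Lemma retained_bound (H : hyp) i :
  #|retained (vc_dim H).+1 H i| <= n.+1 ^ vc_dim H.
Proof.
set d := vc_dim H; set R := retained d.+1 H i.
apply: leq_trans (pajor R) _; apply: leq_trans (card_small n d).
apply: subset_leq_card; apply/subsetP => S; rewrite !inE => shS.
rewrite leqNgt; apply/negP => cS.
have [S' sS' cS'] := subset_of_card cS.
have shS' := shattered_sub shS sS'.
have [E ER eE] := shatteredP _ _ shS S (subxx S).
have [sE tE] := retained_prop (ltn0Sn d) ER.
have sSp : S' \subset Defs.prefix n i.
  apply: subset_trans sS' _; apply: subset_trans sE; by rewrite -eE subsetIl.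
have : shattered H S'.
  apply/shatteredP => T sT.
  have [E' E'R e'] := shatteredP _ _ shS' T sT.
  have [_ tE'] := retained_prop (ltn0Sn d) E'R.
  have [F FH eF] := tE' S' sSp cS'.
  by exists F => //; rewrite eF.
move/vc_dim_shattered; rewrite cS' -/d; by rewrite ltnn.
Qed.
End Ret.

Lemma leq_expb m1 m2 e : m1 <= m2 -> m1 ^ e <= m2 ^ e.
Proof. by move=> h; case: e => [//|e]; rewrite leq_exp2r. Qed.

Lemma sum_le_const (I : finType) (P : pred I) (f : I -> nat) c :
  (forall i, P i -> f i <= c) -> \sum_(i | P i) f i <= #|P| * c.
Proof.
move=> h; apply: (leq_trans (@leq_sum _ (index_enum I) P f (fun _ => c) h)).
by rewrite big_const iter_addn_0 mulnC.
Qed.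

Section Cost.
Variables (n : nat) (H G : {set {set 'I_n}}).
Let d := vc_dim H.
Let k := d.+1.
Let h := #|H|.
Let g := #|G|.
Let L := (trunc_log 2 h).+1.
Let X := n.+1 * g.+1.
Let B := X ^ L.

Lemma X_ge1 : 1 <= X. Proof. by rewrite /X muln_gt0. Qed.
Lemma P_leX : n.+1 <= X. Proof. by rewrite /X leq_pmulr. Qed.
Lemma g_leX : g.+1 <= X. Proof. by rewrite /X leq_pmull. Qed.
Lemma k_leL : k <= L. Proof. by rewrite /k /L ltnS vc_dim_log. Qed.
Lemma X_leB : X <= B.
Proof. by rewrite /B -{1}(expn1 X) leq_pexp2l ?X_ge1. Qed.
Lemma B_ge1 : 1 <= B. Proof. exact: leq_trans X_ge1 X_leB. Qed.
Lemma Pk_leB : n.+1 ^ k <= B.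
Proof.
apply: leq_trans (leq_expb L P_leX).
by rewrite leq_pexp2l ?k_leL.
Qed.
Lemma Pd_leB : n.+1 ^ d <= B.
Proof. apply: leq_trans Pk_leB; by rewrite leq_pexp2l // /k. Qed.
Lemma gk_leB : g.+1 ^ k.+1 <= B * B.
Proof.
apply: leq_trans (leq_expb _ g_leX) _.
apply: leq_trans (_ : X ^ L.+1 <= _); first by rewrite leq_pexp2l ?X_ge1 // ltnS k_leL.
by rewrite expnS /B leq_mul2r X_leB orbT.
Qed.
Lemma h_leB : h.+1 <= 3 * B.
Proof.
case: (posnP n) => n0.
  have : h <= 1.
    apply: leq_trans (_ : #|[set (set0 : {set 'I_n})]| <= 1); last by rewrite cards1.
    apply: subset_leq_card; apply/subsetP => E _; rewrite inE; apply/eqP/setP => v.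
    by have := ltn_ord v; rewrite {2}n0.
  by move: B_ge1; lia.
have h2 : h.+1 <= 2 ^ L by apply: trunc_log_ltn.
apply: leq_trans h2 _; apply: leq_trans (_ : B <= 3 * B); last by lia.
by apply: leq_expb; apply: leq_trans P_leX; rewrite ltnS.
Qed.

Lemma n_leB : n <= B.
Proof. apply: leq_trans X_leB; apply: leq_trans P_leX; exact: leqnSn. Qed.

Lemma ct_le : cost_trace_check H <= 3 * B * B.
Proof.
rewrite /cost_trace_check -/h.
have := h_leB; have := n_leB; nia.
Qed.

Lemma small_le : #|[set S : {set 'I_n} | #|S| <= k]| <= B.
Proof. exact: leq_trans (card_small n k) Pk_leB. Qed.

Lemma step1_le : cost_step1 H G k <= (B * B) * (3 * B * B + B * (B * B)).
Proof.
rewrite /cost_step1; apply: leq_trans (sum_le_const (c := 3 * B * B + B * (B * B)) _) _.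
  move=> [T S] /andP[/eqP /= cS sT]; apply: leq_add; first exact: ct_le.
  case: ifP => _ //; apply: leq_mul; first exact: n_leB.
  apply: leq_trans gk_leB; apply: leq_trans (leq_expb _ (leqnSn g)) _.
  rewrite leq_pexp2l // ltnS -cS; exact: subset_leq_card.
rewrite leq_mul2r; apply/orP; right.
set A := [set S : {set 'I_n} | #|S| <= k].
apply: leq_trans (_ : #|setX A A| <= _); last by rewrite cardsX leq_mul ?small_le.
apply: subset_leq_card; apply/subsetP => -[T S]; rewrite unfold_in => /andP[/eqP /= cS sT].
by rewrite !inE /= cS leqnn andbT -cS subset_leq_card.
Qed.

Lemma stage_le i : cost_stage H k i <= (2 * B * (B * (3 * B * B)).+1).+1.
Proof.
rewrite /cost_stage ltnS; apply: leq_mul; first apply: leq_mul => //.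
  exact: leq_trans (retained_bound H i.-1) Pd_leB.
rewrite ltnS; apply: leq_mul; last exact: ct_le.
apply: leq_trans small_le; apply: subset_leq_card; apply/subsetP => S.
by rewrite !inE => /andP[/andP[_ /eqP ->] _].
Qed.

Lemma step2_le : cost_step2 H G k <=
  n * (2 * B * (B * (3 * B * B)).+1).+1 + B * (h * (3 * B * B) + (n * n * g).+1).
Proof.
rewrite /cost_step2; apply: leq_add.
  apply: leq_trans (_ : _ <= \sum_(1 <= i < n.+1) (2 * B * (B * (3 * B * B)).+1).+1) _.
    by apply: leq_sum => i _; exact: stage_le.
  by rewrite sum_nat_const_nat subn1.
rewrite sum_nat_const; apply: leq_mul.
  exact: leq_trans (retained_bound H n) Pd_leB.
by rewrite leq_add2r leq_mul2l ct_le orbT.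
Qed.

Lemma poly_le b : 1 <= b ->
  (b * b * (3 * b * b + b * (b * b)) +
  (b * (2 * b * (b * (3 * b * b)).+1).+1 + b * (3 * b * (3 * b * b) + (b * b * b).+1))).+1
  <= 30 * b ^ 5.
Proof.
move=> b1; rewrite !expnS expn0 muln1.
have e1 : 1 <= b * b by nia.
have e2 : b * b <= b * b * b by nia.
have e3 : b * b * b <= b * b * b * b by nia.
have e4 : b * b * b * b <= b * b * b * b * b by nia.
nia.
Qed.

Lemma total_le : dualize_cost H G k <= 30 * B ^ 5.
Proof.
rewrite /dualize_cost.
apply: leq_trans (poly_le B_ge1); rewrite ltnS.
apply: leq_add; first exact: step1_le.
apply: leq_trans step2_le _.
have hb : h <= 3 * B by move: h_leB; lia.
have nb := n_leB.
have gb : g <= B by apply: leq_trans X_leB; apply: leq_trans g_leX.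
apply: leq_add; first by rewrite leq_mul2r nb orbT.
rewrite leq_mul2l; apply/orP; right; apply: leq_add; first by rewrite leq_mul2r hb orbT.
by rewrite ltnS; apply: leq_mul; first apply: leq_mul.
Qed.
End Cost.

Theorem corollary5 :
  exists c : nat, forall (n : nat) (H G : {set {set 'I_n}}),
    sperner H -> sperner G ->
    G \subset Tr H -> H \subset Tr G ->
    dualize_cost H G (vc_dim H).+1
      <= c * (n.+1 * (#|G|).+1) ^ (c * (trunc_log 2 #|H|).+1).
Proof.
exists 30 => n H G _ _ _ _.
apply: leq_trans (total_le H G) _.
rewrite leq_mul2l /= -expnM; apply: leq_pexp2l; first by rewrite muln_gt0.
by rewrite mulnC leq_mul2r.
Qed.
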